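(* For every $8$-uniform hypergraph $H=(V,E)$ with $m=|E|$, \[100\,\tau(H) \le 10.2854\,n_1 + 16.0254\,n_2 + 17.3256\,n_3 + 17.7171\,n_{\ge 4} + 17.7171\,m.\]
   Context: A hypergraph $H=(V,E)$ consists of a finite vertex set $V$ and a finite collection $E$ of subsets of $V$ (edges); it is $k$-uniform if every edge has exactly $k$ vertices. The degree of a vertex $v$ is the number of edges containing $v$. For $i\ge 1$, $n_i$ denotes the number of vertices of degree exactly $i$, and $n_{\ge i}=\sum_{j\ge i} n_j$. A transversal is a vertex set meeting every edge; $\tau(H)$ is the minimum size of a transversal. *)

(* Defs.v *)
From HB Require Import structures.
From mathcomp Require Import all_boot all_order all_algebra.
Set Implicit Arguments. Unset Strict Implicit. Unset Printing Implicit Defensive.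

(* A hypergraph on the finite vertex type V is given by its edge collection
   E : seq {set V} (a finite collection of subsets; repeated edges allowed). *)

Definition uniform (V : finType) (k : nat) (E : seq {set V}) : bool :=
  all (fun e : {set V} => #|e| == k) E.

Definition deg (V : finType) (E : seq {set V}) (v : V) : nat :=
  count (fun e : {set V} => v \in e) E.

Definition n_deg (V : finType) (E : seq {set V}) (i : nat) : nat :=
  #|[set v : V | deg E v == i]|.

Definition n_deg_ge (V : finType) (E : seq {set V}) (i : nat) : nat :=
  #|[set v : V | i <= deg E v]|.

Definition is_transversal (V : finType) (E : seq {set V}) (T : {set V}) : bool :=
  all (fun e : {set V} => T :&: e != set0) E.

(* tau(H): minimum size of a transversal (defaults to #|V| if none exists,
   which never happens when all edges are nonempty). *)
Definition tau (V : finType) (E : seq {set V}) : nat :=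
  \big[minn/#|V|]_(T : {set V} | is_transversal E T) #|T|.

(* Main.v *)
Require Import Defs.
From HB Require Import structures.
From mathcomp Require Import all_boot all_order all_algebra.
From mathcomp Require Import ring lra zify.
Import Order.TTheory GRing.Theory Num.Theory.
Local Open Scope ring_scope.

Definition c1 : rat := locked (102854%:R / 10000%:R).
Definition cB : rat := locked (177171%:R / 10000%:R).
Lemma c1E : c1 = 102854%:R / 10000%:R. Proof. by rewrite /c1 -lock. Qed.
Lemma cBE : cB = 177171%:R / 10000%:R. Proof. by rewrite /cB -lock. Qed.
Lemma c1b : 10%:R <= c1 <= 11%:R. Proof. rewrite c1E; apply/andP; split; lra. Qed.
Lemma c1B : 100%:R <= 8%:R * c1 + cB. Proof. rewrite c1E cBE; lra. Qed.
Lemma cBb : 17%:R <= cB <= 18%:R. Proof. rewrite cBE; apply/andP; split; lra. Qed.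

Definition q (d : nat) : rat :=
  match d with 0 => 0 | 1 => c1 | 2 => 14%:R | 3 => 31%:R / 2%:R | _ => 16%:R end.

Definition dl (d : nat) : rat :=
  match d with 0 => 0 | 1 => c1 | 2 => 14%:R - c1 | 3 => 3%:R / 2%:R
  | 4 => 1%:R / 2%:R | _ => 0 end.

Lemma q_ge0 d : 0 <= q d.
Proof. have /andP[? ?] := c1b; rewrite /q; case: d => [|[|[|[|d]]]]; lra. Qed.

Lemma q_S n : q n <= q n.+1.
Proof. have /andP[? ?] := c1b. case: n => [|[|[|[|n]]]]; rewrite /q; lra. Qed.

Lemma dl_inc i d : (i < d)%N -> dl d <= q i.+1 - q i.
Proof.
have /andP[? ?] := c1b.
case: (leqP 5 d) => h5 hi.
  have -> : dl d = 0 by move: h5; rewrite /dl; case: d {hi} => [|[|[|[|[|d]]]]].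
  by rewrite subr_ge0 q_S.
move: h5 hi; case: d => [|[|[|[|[|d]]]]]; case: i => [|[|[|[|[|i]]]]].
all: try (move=> ? ?; exfalso; lia).
all: move=> _ _; rewrite /dl /q; lra.
Qed.

Lemma qstep' a k d : (a + k <= d)%N -> q a + dl d * k%:R <= q (a + k).
Proof.
elim: k => [|k IH] h.
  by rewrite mulr0 addr0 addn0.
have h1 : (a + k < d)%N by rewrite -addnS.
have := @dl_inc (a + k) d h1; have := IH (ltnW h1).
rewrite addnS -[k.+1]addn1 natrD mulrDr mulr1; lra.
Qed.

Lemma qstep a b d : (a <= b)%N -> (b <= d)%N ->
  q a + dl d * (b%:R - a%:R) <= q b.
Proof.
move=> ab bd; rewrite -(natrB _ ab) -{2}(subnKC ab); apply: qstep'.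
by rewrite subnKC.
Qed.

Lemma final_ineq d : (0 < d)%N ->
  100%:R <= q d + dl d * (7 * d)%:R + cB * d%:R.
Proof.
move=> hd.
case: (leqP 5 d) => h5.
  have -> : dl d = 0 by rewrite /dl; case: d hd h5 => [|[|[|[|[|d]]]]].
  have -> : q d = 16%:R by rewrite /q; case: d hd h5 => [|[|[|[|[|d]]]]].
  have : 5%:R <= d%:R :> rat by rewrite ler_nat.
  rewrite cBE; lra.
have := c1B; have /andP[? ?] := cBb.
rewrite natrM; move: hd h5; case: d => [|[|[|[|[|d]]]]].
all: try (move=> ? ? ?; exfalso; lia).
all: move=> _ _ ?; rewrite /q /dl ?c1E ?cBE; lra.
Qed.

Section Hyp.
Variable V : finType.
Implicit Types (E : seq {set V}).

Lemma tau_le E (T : {set V}) : Defs.is_transversal E T -> (tau E <= #|T|)%N.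
Proof.
move=> hT; rewrite /tau.
have : T \in index_enum {set V} by rewrite mem_index_enum.
elim: (index_enum _) => [|x r IH] //=.
rewrite big_cons inE => /orP [/eqP <-|xr].
  by rewrite hT geq_minl.
case: ifP => _; last exact: IH.
by rewrite geq_min IH ?orbT.
Qed.

Lemma tau_leV E : (tau E <= #|V|)%N.
Proof.
rewrite /tau; apply: (big_ind (fun x => x <= #|V|)%N) => //.
- by move=> x y hx hy; rewrite geq_min hx.
- by move=> T _; exact: max_card.
Qed.

Lemma tau_filter E (v : V) :
  (tau E <= (tau [seq e : {set V} <- E | v \notin e]).+1)%N.
Proof.
rewrite {2}/tau; apply: (big_ind (fun x => tau E <= x.+1)%N).
- exact: leqW (tau_leV E).
- by move=> x y hx hy; rewrite /minn; case: ifP.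
move=> T hT.
have hT' : Defs.is_transversal E (v |: T).
  apply/allP => e eE.
  case ve: (v \in e).
    by apply/set0Pn; exists v; rewrite !inE eqxx ve.
  have /(allP hT) : e \in [seq e : {set V} <- E | v \notin e] by rewrite mem_filter ve.
  case/set0Pn => x; rewrite inE => /andP[xT xe].
  by apply/set0Pn; exists x; rewrite !inE xT xe orbT.
apply: leq_trans (@tau_le E _ hT') _.
by rewrite cardsU1; case: (v \in T).
Qed.

Lemma handshake E : uniform 8 E -> (\sum_u deg E u = 8 * size E)%N.
Proof.
elim: E => [|e E IH] /=.
  by move=> _; rewrite big1.
case/andP => /eqP he hE.
rewrite /deg /=.
under eq_bigr => u _ do rewrite -/(deg E u).
rewrite big_split /= IH // mulnS; congr (_ + _)%N.
rewrite -he -sum1_card [RHS]big_mkcond /=; apply: eq_bigr => u _; by case: (u \in e).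
Qed.

Lemma handshakeR E : uniform 8 E ->
  \sum_u (deg E u)%:R = 8%:R * (size E)%:R :> rat.
Proof. by move=> hE; rewrite -natr_sum (@handshake E hE) natrM. Qed.

Lemma step E (v : V) : uniform 8 E -> (forall u, (deg E u <= deg E v)%N) ->
  (0 < deg E v)%N ->
  \sum_u q (deg [seq e : {set V} <- E | v \notin e] u)
    + cB * (size [seq e : {set V} <- E | v \notin e])%:R + 100%:R
  <= \sum_u q (deg E u) + cB * (size E)%:R.
Proof.
move=> hU hmax hd.
set E' := [seq e : {set V} <- E | v \notin e].
set d := deg E v.
have hU' : uniform 8 E'.
  by apply/allP => e; rewrite mem_filter => /andP[_ /(allP hU)].
have gv : deg E' v = 0%N.
  rewrite /deg count_filter; apply/eqP; rewrite -leqn0 leqNgt -has_count.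
  by apply/hasP => -[e _] /=; case: (v \in e).
have gle u : (deg E' u <= deg E u)%N.
  by rewrite /deg count_filter; apply: sub_count => e /andP[].
have hsz : (size E' + d = size E)%N.
  by rewrite size_filter addnC /d /deg count_predC.
have hszR : (size E)%:R = (size E')%:R + d%:R :> rat by rewrite -hsz natrD.
have hsum : \sum_u ((deg E u)%:R - (deg E' u)%:R) = 8%:R * d%:R :> rat.
  rewrite sumrB (@handshakeR E hU) (@handshakeR E' hU') hszR; ring.
have hsum' : \sum_(u | u != v) ((deg E u)%:R - (deg E' u)%:R)
     = 7%:R * d%:R :> rat.
  move: hsum; rewrite (bigD1 v isT) /= gv -/d => h.
  have -> : 7%:R * d%:R = 8%:R * d%:R - (d%:R - 0%:R) :> rat by ring.
  by rewrite -h; ring.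
rewrite [X in _ <= X + _](bigD1 v isT) [X in X + _ + _ <= _](bigD1 v isT) /=.
rewrite gv -/d.
have hle : \sum_(u | u != v) (q (deg E' u) + dl d * ((deg E u)%:R - (deg E' u)%:R))
   <= \sum_(u | u != v) q (deg E u).
  by apply: ler_sum => u _; apply: qstep; [exact: gle | exact: hmax].
move: hle; rewrite big_split /= -mulr_sumr hsum' => hle.
have hf := @final_ineq _ hd.
rewrite natrM in hf.
rewrite hszR.
rewrite -/d in hf.
rewrite mulrDr; lra.
Qed.

Lemma main E : uniform 8 E ->
  100%:R * (tau E)%:R <= \sum_u q (deg E u) + cB * (size E)%:R.
Proof.
have [n] := ubnP (size E); elim: n E => [|n IH] E hn hU; first (exfalso; by rewrite ltn0 in hn).
case: E hn hU => [|e E0] hn hU.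
  have -> : tau (V:=V) [::] = 0%N.
    by apply/eqP; rewrite -leqn0 -(cards0 V); apply: (@tau_le [::] set0).
  rewrite mulr0 [size _]/= mulr0 addr0; apply: sumr_ge0 => u _; exact: q_ge0.
set E := e :: E0.
have /card_gt0P [x0 x0e] : (0 < #|e|)%N.
  by move: hU => /andP[/eqP -> _].
have [v _ vmax] := @arg_maxnP V x0 xpredT (deg E) isT.
have hd : (0 < deg E v)%N.
  apply: leq_trans (vmax x0 isT); by rewrite /deg /= x0e.
have hmax u : (deg E u <= deg E v)%N by exact: vmax.
set E' := [seq e : {set V} <- E | v \notin e].
have hU' : uniform 8 E'.
  by apply/allP => e'; rewrite mem_filter => /andP[_ /(allP hU)].
have hsz : (size E' < size E)%N.
  rewrite size_filter -(count_predC (fun e : {set V} => v \in e) E) -/(deg E v).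
  by rewrite addnC -addn1 leq_add2l.
have IH' := IH E' (leq_trans hsz hn) hU'.
have hst := @step E v hU hmax hd.
have ht := tau_filter E v.
have : (tau E)%:R <= (tau E')%:R + 1 :> rat.
  by rewrite natr1 ler_nat.
lra.
Qed.

End Hyp.

Lemma sum_ind (V : finType) (P : pred V) :
  \sum_u (P u)%:R = #|[set u | P u]|%:R :> rat.
Proof.
rewrite -natr_sum; congr (_%:R).
rewrite -sum1_card [RHS]big_mkcond /=; apply: eq_bigr => u _.
by rewrite inE; case: (P u).
Qed.

Definition A2 : rat := locked (160254%:R / 10000%:R).
Definition A3 : rat := locked (173256%:R / 10000%:R).
Lemma A2E : A2 = 160254%:R / 10000%:R. Proof. by rewrite /A2 -lock. Qed.
Lemma A3E : A3 = 173256%:R / 10000%:R. Proof. by rewrite /A3 -lock. Qed.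

Lemma qW k : q k <= c1 * (k == 1)%N%:R + A2 * (k == 2)%N%:R + A3 * (k == 3)%N%:R
   + cB * (3 < k)%N%:R.
Proof.
have h2 : 14%:R <= A2 by rewrite A2E; lra.
have h3 : 31%:R / 2%:R <= A3 by rewrite A3E; lra.
have h4 : 16%:R <= cB by rewrite cBE; lra.
case: k => [|[|[|[|k]]]]; simpl nat_of_bool; rewrite /q; lra.
Qed.

Lemma sum_indc (V : finType) (c : rat) (P : pred V) :
  \sum_u c * (P u)%:R = c * #|[set u | P u]|%:R.
Proof. by rewrite -mulr_sumr sum_ind. Qed.

Theorem mainTheorem4 (V : finType) (E : seq {set V}) :
  uniform 8 E ->
  100%:R * (tau E)%:R <=
    (102854%:R / 10000%:R) * (n_deg E 1)%:R
  + (160254%:R / 10000%:R) * (n_deg E 2)%:R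
  + (173256%:R / 10000%:R) * (n_deg E 3)%:R
  + (177171%:R / 10000%:R) * (n_deg_ge E 4)%:R
  + (177171%:R / 10000%:R) * (size E)%:R :> rat.
Proof.
move=> hU.
have h := @main V E hU.
have key : \sum_u q (deg E u) <=
  \sum_u (c1 * (deg E u == 1)%N%:R) + \sum_u (A2 * (deg E u == 2)%N%:R)
  + \sum_u (A3 * (deg E u == 3)%N%:R) + \sum_u (cB * (3 < deg E u)%N%:R).
  by rewrite -!big_split; apply: ler_sum => u _; exact: qW.
rewrite !sum_indc c1E A2E A3E cBE in key.
rewrite cBE in h.
rewrite /n_deg /n_deg_ge.
lra.
Qed.
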